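(* Let $G$ be a finite group, $p$ a prime, $S$ a Sylow $p$-subgroup of $G$, and let $N$ be a subgroup of $G$ of order prime to $p$ which is normalised by $S$. Suppose $\chi$ is a faithful Steinberg-like character of $G$. Then $N$ is abelian and $C_G(S)=Z(G)Z(S)$.
   Context: A character $\chi$ of $G$ is Steinberg-like (with respect to $p$) if $\chi(g)=0$ for every $g\in G$ of order divisible by $p$ and $\chi(1)=|S|$. Faithful means the associated representation has trivial kernel. *)

(* Defs.v *)
From HB Require Import structures.
From mathcomp Require Import all_boot all_order all_algebra all_fingroup all_solvable all_field all_character.
Set Implicit Arguments. Unset Strict Implicit. Unset Printing Implicit Defensive.
Import GRing.Theory Num.Theory.
Local Open Scope ring_scope.
Local Open Scope group_scope.

Definition steinberg_like (gT : finGroupType) (G S : {group gT}) (p : nat)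
  (chi : 'CF(G)) : Prop :=
  [/\ chi \is a character,
      (forall g, g \in G -> (p %| #[g])%N -> chi g = 0)
    & chi 1%g = (#|S|)%:R].

(* Main.v *)
Require Import Defs.
From HB Require Import structures.
From mathcomp Require Import all_boot all_order all_algebra all_fingroup all_solvable all_field all_character.
From mathcomp Require Import ring.
Local Open Scope group_scope.

Import Order.TTheory GRing.Theory Num.Theory.

Section Key.
Local Open Scope group_scope.
Local Open Scope ring_scope.

Lemma nat_ge1 (x : algC) : x \is a Num.nat -> x != 0 -> 1 <= x.
Proof. by move=> /natrP[n ->]; rewrite pnatr_eq0 ler1n lt0n. Qed.

Variables (gT : finGroupType) (G S N : {group gT}) (p : nat) (chi : 'CF(G)).
Hypotheses (pr_p : prime p) (sylS : p.-Sylow(G) S) (sNG : N \subset G)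
  (coNp : coprime #|N| p) (nNS : S \subset 'N(N)) (Nchi : chi \is a character)
  (chi0 : forall g, g \in G -> (p %| #[g])%N -> chi g = 0)
  (chi1 : chi 1%g = (#|S|)%:R).

Let H := (N <*> S)%G.
Let sSG : S \subset G := pHall_sub sylS.
Let sHG : H \subset G. Proof. by rewrite join_subG sNG. Qed.
Let nsNH : N <| H. Proof. by rewrite normalYl. Qed.
Let pS : p.-group S := pHall_pgroup sylS.
Let p'N : p^'.-group N.
Proof. by rewrite /pgroup p'natE // -prime_coprime // coprime_sym. Qed.
Let TI : N :&: S = 1%g.
Proof. by apply: coprime_TIg; rewrite coprime_sym (pnat_coprime pS). Qed.
Let cardH : #|H| = (#|N| * #|S|)%N.
Proof. by rewrite /= norm_joinEr // TI_cardMg. Qed.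
Let iHN : #|H : N| = #|S|.
Proof. by rewrite -divgS ?normal_sub // cardH mulKn. Qed.
Let HallN : p^'.-Hall(H) N.
Proof. by rewrite /pHall normal_sub // p'N pnatNK iHN. Qed.
Let vanish x : x \in H -> x \notin N -> chi x = 0.
Proof.
move=> Hx xN; apply: chi0; first exact: (subsetP sHG).
have := mem_normal_Hall HallN nsNH Hx; rewrite (negbTE xN) /p_elt p'natE //.
by move/esym/negbFE.
Qed.

Lemma key_constt (t : Iirr N) : t \in irr_constt ('Res[N] chi) ->
  'chi_t 1%g = 1 /\ (S \subset 'I['chi_t] -> 'Res[N] chi = (#|S|)%:R *: 'chi_t).
Proof.
move=> Ct; set theta := 'chi_t; set T := ('I_H[theta])%G.
set m := '['Res[N] chi, theta].
have sNT : N \subset T by rewrite subsetI normal_sub // sub_inertia.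
have sTH : T \subset H := Inertia_sub _ _.
have nsNT : N <| T := normalS sNT sTH nsNH.
have pHN : p.-group (H / N) by rewrite /= norm_joinEr // quotientMidl quotient_pgroup.
have pTN : p.-group (T / N) := pgroupS (quotientS N sTH) pHN.
have co : coprime #|T : N| ('o(theta)%CF * Num.truncn (theta 1%g)).
  rewrite -card_quotient ?normal_norm //; apply: (pnat_coprime pTN).
  rewrite pnatM; apply/andP; split; apply: pnat_dvd p'N.
    exact: cforder_lin_char_dvdG (cfDet_lin_char _).
  by have := dvd_irr1_cardG t; rewrite -[in X in X -> _](truncnK (Cnat_irr1 t)) dvdC_nat.
have [c [cRes _ _]] := extend_solvable_coprime_irr nsNT (pgroup_sol pTN) (subsetIr _ _) co.
have Nz : (#|N|%:R : algC) != 0 by rewrite pnatr_eq0 -lt0n cardG_gt0.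
have Tz : (#|T|%:R : algC) != 0 by rewrite pnatr_eq0 -lt0n cardG_gt0.
have dot : '['Res[T] chi, 'chi_c] = #|N|%:R / #|T|%:R * m.
  rewrite cfdotE (big_setID N) /= (setIidPr sNT) [X in _ + X]big1 ?addr0; last first.
    move=> x /setDP[Tx xN]; rewrite cfResE ?(subset_trans sTH sHG) //.
    by rewrite vanish ?mul0r // (subsetP sTH).
  rewrite /m cfdotE.
  have -> : \sum_(x in N) 'Res[T] chi x * ('chi_c x)^* =
            \sum_(x in N) 'Res[N] chi x * (theta x)^*.
    apply: eq_bigr => x Nx; rewrite /theta -cRes !cfResE ?(subsetP sNT) //.
    exact: subset_trans sTH sHG.
  by field; apply/andP.
have mge : (#|T : N|)%:R <= m.
  have Cd := Cnat_cfdot_char (cfRes_char T Nchi) (irr_char c).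
  have mz : m != 0 by rewrite -irr_consttE.
  have dz : '['Res[T] chi, 'chi_c] != 0.
    by rewrite dot; apply: mulf_neq0 => //; apply: mulf_neq0; rewrite // invr_eq0.
  have -> : m = (#|T : N|)%:R * '['Res[T] chi, 'chi_c].
    rewrite dot -(Lagrange sNT) natrM; field; by rewrite Nz pnatr_eq0 -lt0n indexg_gt0.
  by rewrite -{1}[_%:R]mulr1 ler_wpM2l ?ler0n ?nat_ge1.
have Hinv h : h \in H -> ('Res[N] chi ^ h)%CF = 'Res[N] chi.
  move=> Hh; have nNh : h \in 'N(N) := subsetP (normal_norm nsNH) h Hh.
  apply/cfun_inP => x Nx; rewrite cfConjgE // !cfResE ?memJ_norm ?groupV //.
  by rewrite cfunJ // groupV (subsetP sHG).
have mC i : i \in cfclass_Iirr H t -> '['Res[N] chi, 'chi_i] = m /\ 'chi_i 1%g = theta 1%g.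
  case/imsetP=> h Hh ->; rewrite conjg_IirrE cfConjg1; split=> //.
  by rewrite -{1}(Hinv h Hh) cfConjg_iso.
have decomp : chi 1%g = \sum_i '['Res[N] chi, 'chi_i] * 'chi_i 1%g.
  rewrite -(cfRes1 N) {1}(cfun_sum_cfdot ('Res[N] chi)) sum_cfunE.
  by apply: eq_bigr => i _; rewrite cfunE.
have ge0 i : 0 <= '['Res[N] chi, 'chi_i] * 'chi_i 1%g.
  apply: mulr_ge0; [apply: natr_ge0; apply: Cnat_cfdot_char_irr; exact: cfRes_char | exact: char1_ge0 (irr_char i)].
have orbit : (#|H : T|)%:R * m * theta 1%g <= chi 1%g.
  rewrite decomp (bigID (mem (cfclass_Iirr H t))) /= -[X in X <= _]addr0 lerD ?sumr_ge0 //.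
  rewrite (eq_bigr (fun=> m * theta 1%g)); last by move=> i /mC[-> ->].
  by rewrite sumr_const -card_cfclass_Iirr // -mulrA mulr_natl.
have Spos : (0 : algC) < #|S|%:R by rewrite ltr0n cardG_gt0.
have th1 : theta 1%g = 1.
  apply/le_anti/andP; split; last by apply: nat_ge1; [exact: Cnat_irr1 | exact: irr1_neq0].
  rewrite -(ler_pM2l Spos) mulr1 -{2}chi1; apply: le_trans orbit.
  rewrite -iHN -(Lagrange_index sTH sNT) natrM; apply: ler_wpM2r; first exact: ltW (irr1_gt0 t).
  by apply: ler_wpM2l; [exact: ler0n | exact: mge].
split=> // sSI.
have eTH : (T : {set gT}) = H by apply/setIidPl; rewrite join_subG sub_inertia sSI.
have iTN : #|T : N| = #|S| by rewrite eTH.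
have iHT : #|H : T| = 1%N by rewrite eTH indexgg.
have mS : m = #|S|%:R.
  apply/le_anti/andP; split; last by rewrite -iTN mge.
  by move: orbit; rewrite iHT mul1r th1 mulr1 chi1.
have rest i : i != t -> '['Res[N] chi, 'chi_i] = 0.
  move=> it; move: decomp; rewrite (bigD1 t) //= -/theta -/m mS th1 mulr1 chi1.
  rewrite -{1}[#|S|%:R]addr0 => /addrI /esym /(psumr_eq0P (fun i _ => ge0 i)).
  move=> /(_ i it) /eqP; rewrite mulf_eq0 (negbTE (irr1_neq0 i)) orbF.
  by move/eqP.
rewrite {1}(cfun_sum_cfdot ('Res[N] chi)) (bigD1 t) //= big1 ?addr0 -/theta -/m ?mS //.
by move=> i /rest ->; rewrite scale0r.
Qed.

End Key.

Theorem lemma2p3 (gT : finGroupType) (G S N : {group gT}) (p : nat)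
  (chi : 'CF(G)) :
  prime p ->
  S \in 'Syl_p(G) ->
  N \subset G ->
  coprime #|N| p ->
  S \subset 'N(N) ->
  steinberg_like S p chi ->
  cfaithful chi ->
  abelian N /\ 'C_G(S) = 'Z(G) * 'Z(S).
Proof.
move=> pr_p sylS sNG coNp nNS [Nchi chi0 chi1] ffchi.
have sylS' : p.-Sylow(G) S by move: sylS; rewrite inE.
have sSG := pHall_sub sylS'.
have ZG : ('Z(chi))%CF \subset 'Z(G).
  rewrite subsetI cfcenter_sub /=.
  have := cfcenter_subset_center chi; rewrite subsetI => /andP[_].
  have nKG := normal_norm (cfker_normal chi).
  rewrite quotient_cents2; [move=> sRK | exact: subset_trans (cfcenter_sub chi) nKG | exact: nKG].
  by apply/commG1P/trivgP; apply: subset_trans sRK ffchi.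
split.
  apply/derG1P/trivgP; apply: subset_trans ffchi.
  have : N^`(1) \subset cfker ('Res[N] chi)%R.
    rewrite (cfkerE (cfRes_char N Nchi)) subsetI der_sub.
    apply/bigcapsP => i Ci; apply: lin_char_der1.
    by rewrite qualifE /= irr_char (proj1 (@key_constt gT G S N p chi pr_p sylS' sNG coNp nNS Nchi chi0 chi1 i Ci)) eqxx.
  by rewrite cfker_Res // => /subset_trans; apply; apply: subsetIr.
apply/eqP; rewrite eqEsubset; apply/andP; split; last first.
  by rewrite mul_subG // ?(setIS G (centS sSG)) ?(setSI _ sSG).
apply/subsetP => x CGSx; have [Gx cSx] := setIP CGSx.
have sXC : <[x]> \subset 'C_G(S) by rewrite cycle_subG.
rewrite -(consttC p^' x) consttNK mem_mulg //.
  set y := x.`_p^'.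
  have Cy : y \in 'C_G(S) := subsetP sXC _ (cycle_constt _ x).
  have [Gy cSy] := setIP Cy.
  apply: (subsetP ZG).
  have sYG : <[y]> \subset G by rewrite cycle_subG.
  have coYp : coprime #|<[y]>| p.
    rewrite coprime_sym prime_coprime // -p'natE //; exact: p_elt_constt.
  have cYS : S \subset 'C(<[y]>) by rewrite centsC cycle_subG.
  have nYS : S \subset 'N(<[y]>) := subset_trans cYS (cent_sub _).
  have [t Ct] : exists t, t \in irr_constt ('Res[<[y]>] chi)%R.
    apply: neq0_has_constt; apply/eqP => /(congr1 (fun f : 'CF(<[y]>) => f 1%g)).
    by rewrite cfRes1 chi1 cfunE => /eqP; rewrite pnatr_eq0 eqn0Ngt cardG_gt0.
  have sSI : S \subset 'I[('chi_t)%R].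
    apply/subsetP => s Ss; rewrite inE (subsetP nYS) //=; apply/eqP/cfun_inP => z Yz.
    rewrite cfConjgE ?(subsetP nYS) //; congr (_ _); apply/conjg_fixP.
    apply/commgP; apply: commuteV; have := centP (subsetP cYS s Ss) z Yz; try by []; by move/commute_sym.
  have [th1 hRes] := @key_constt gT G S <[y]>%G p chi pr_p sylS' sYG coYp nYS Nchi chi0 chi1 t Ct.
  have lin : ('chi_t)%R \is a linear_char by rewrite qualifE /= irr_char th1 eqxx.
  rewrite char_cfcenterE // -(cfResE chi sYG (cycle_id y)) (hRes sSI) cfunE.
  by rewrite normrM normC_lin_char ?cycle_id // mulr1 chi1 ger0_norm ?ler0n.
have Cxp := subsetP sXC _ (cycle_constt p x).
have Nxp : x.`_p \in 'N_G(S) := subsetP (setIS G (cent_sub S)) _ Cxp.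
have nsS : S <| 'N_G(S) by rewrite normal_subnorm.
have hallS : p.-Hall('N_G(S)) S := pHall_subl (normal_sub nsS) (subsetIl G _) sylS'.
rewrite inE (mem_normal_Hall hallS nsS Nxp) p_elt_constt /=.
by case/setIP: Cxp.
Qed.
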